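(* Let $K$ be a field equipped with a field endomorphism $\sigma$, and for a matrix $E$ over $K$ and $j\in\mathbb{N}$ let $E^{(j)}$ denote $E$ with $\sigma^j$ applied entrywise. Let $E_1,\ldots,E_t\in K^{p\times q}$ with $t\ge1$. For $k\ge1$ let $N_k$ be the $k\times k$ block matrix (blocks of size $p\times q$) whose block in block row $a$ and block column $b$ ($0\le a,b\le k-1$) is $E_{a-b+1}^{(a)}$ if $0\le a-b\le t-1$ and zero otherwise; i.e. \[N_k=\begin{pmatrix} E_1&&&&&\\ E_2^{(1)}&E_1^{(1)}&&&&\\ \vdots&\vdots&\ddots&&&\\ E_t^{(t-1)}&E_{t-1}^{(t-1)}&\cdots&E_1^{(t-1)}&&\\ &\ddots&\ddots&\ddots&\ddots&\\ &&E_t^{(k-1)}&E_{t-1}^{(k-1)}&\cdots&E_1^{(k-1)} \end{pmatrix}.\] Then there exist $d'\in\mathbb{N}$ and $a'\in\mathbb{Z}$ such that $\operatorname{rank}_K(N_k)=d'k+a'$ for all sufficiently large $k$. Moreover, the least $k_0$ such that this equality holds for all $k\ge k_0$ is at most $(t-1)(\min\{p,q\}+2)$. *)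

(* Defs.v *)
From HB Require Import structures.
From mathcomp Require Import all_boot all_order all_algebra.
Set Implicit Arguments. Unset Strict Implicit. Unset Printing Implicit Defensive.
Import GRing.Theory Num.Theory.
Local Open Scope ring_scope.

Lemma ltn_mod_blk (k p : nat) (i : 'I_(k * p)) : (i %% p < p)%N.
Proof.
case: p i => [|p] i; last by rewrite ltn_mod.
by case: i => m; rewrite muln0.
Qed.

Definition blk_off (k p : nat) (i : 'I_(k * p)) : 'I_p := Ordinal (ltn_mod_blk i).

(* E is indexed 1..t (E 0 and E n for n > t are never used). *)
Definition Nmat (K : fieldType) (sigma : {rmorphism K -> K}) (p q t : nat)
  (E : nat -> 'M[K]_(p, q)) (k : nat) : 'M[K]_(k * p, k * q) :=
  \matrix_(i < k * p, j < k * q)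
    let a := (i %/ p)%N in
    let b := (j %/ q)%N in
    if (b <= a)%N && (a - b < t)%N then
      iter a sigma (E (a - b).+1 (blk_off i) (blk_off j))
    else 0.

(* Main.v *)
Require Import Defs.
From HB Require Import structures.
From mathcomp Require Import all_boot all_order all_algebra.
From mathcomp Require Import zify.
Set Implicit Arguments. Unset Strict Implicit. Unset Printing Implicit Defensive.
Import GRing.Theory Num.Theory.
Local Open Scope ring_scope.

Section Blk.
Variable K : fieldType.

Lemma ker_blk p q n r (A : 'M[K]_(p,q)) (C : 'M_(n,q)) (B : 'M_(n,r)) :
  (kermx (block_mx A 0 C B) :=:
   kermx (col_mx A (kermx B *m C)) *m block_mx 1%:M 0 0 (kermx B))%MS.
Proof.
set Y := col_mx A _.
apply/eqmxP/andP; split; last first.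
  apply/sub_kermxP; rewrite -mulmxA mulmx_block !mul1mx !mul0mx !addr0 !add0r.
  rewrite mulmx_ker.
  have -> : block_mx A 0 (kermx B *m C) 0 = row_mx Y (0 : 'M_(p + n, r)).
    by rewrite block_mxEh col_mx0.
  by rewrite mul_mx_row mulmx_ker mulmx0 row_mx0.
set Z := kermx _.
have ZN : Z *m block_mx A 0 C B = 0 by apply: mulmx_ker.
rewrite -[Z]hsubmxK in ZN *.
rewrite mul_row_block !mulmx0 add0r in ZN.
rewrite -row_mx0 in ZN; case/eq_row_mx: ZN => Z1 Z2.
have /submxP [V VE] : (rsubmx Z <= kermx B)%MS by apply/sub_kermxP.
rewrite VE.
have -> : row_mx (lsubmx Z) (V *m kermx B) = row_mx (lsubmx Z) V *m block_mx 1%:M 0 0 (kermx B).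
  by rewrite mul_row_block !mulmx0 mulmx1 addr0 add0r.
apply: submxMr; apply/sub_kermxP.
by rewrite mul_row_col mulmxA -VE.
Qed.

Lemma rank_blk p q n r (A : 'M[K]_(p,q)) (C : 'M_(n,q)) (B : 'M_(n,r)) :
  \rank (block_mx A 0 C B) = (\rank (col_mx A (kermx B *m C)) + \rank B)%N.
Proof.
set Y := col_mx A _; set X := block_mx (1%:M : 'M_p) 0 0 (kermx B).
have sub : (kermx X <= kermx Y)%MS.
  apply/sub_kermxP; set Z := kermx X.
  have ZX : Z *m X = 0 by apply: mulmx_ker.
  rewrite -[Z]hsubmxK in ZX *.
  rewrite mul_row_block !mulmx0 mulmx1 addr0 add0r -row_mx0 in ZX.
  case/eq_row_mx: ZX => Z1 Z2.
  by rewrite mul_row_col Z1 mul0mx add0r mulmxA Z2 mul0mx.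
have h1 := mxrank_mul_ker (kermx Y) X.
rewrite (capmx_idPr sub) in h1.
have h2 : \rank (kermx (block_mx A 0 C B)) = \rank (kermx Y *m X) by rewrite (ker_blk A C B).
rewrite !mxrank_ker rank_diag_block_mx mxrank1 mxrank_ker in h1 h2.
rewrite -h2 in h1.
have := rank_leq_row (block_mx A 0 C B).
have := rank_leq_row Y.
have := rank_leq_row B.
lia.
Qed.
End Blk.

Section Conc.
Variable K : fieldType.
Variable sigma : {rmorphism K -> K}.
Variables (p q t : nat) (E : nat -> 'M[K]_(p, q)).

Definition selmx n1 n2 : 'M[K]_(n1,n2) := \matrix_(i,j) ((i:nat) == j)%:R.
Definition Gmx : 'M[K]_(((t-1) * p)%N, q) :=
  \matrix_(l, j) iter (l %/ p)%N.+1 sigma (E (l %/ p)%N.+2 (blk_off l) j).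

Lemma sel_mulE k n r (M : 'M[K]_(n,r)) (i : 'I_k) j (h : (i < n)%N) :
  (selmx k n *m M) i j = M (Ordinal h) j.
Proof.
rewrite mxE (bigD1 (Ordinal h)) //= mxE eqxx mul1r big1 ?addr0 // => l ne.
rewrite mxE; case: eqP => [e|]; last by rewrite mul0r.
by case/eqP: ne; apply: val_inj.
Qed.

Lemma sel_mul0 k n r (M : 'M[K]_(n,r)) (i : 'I_k) j : (n <= i)%N ->
  (selmx k n *m M) i j = 0.
Proof.
move=> h; rewrite mxE big1 // => l _; rewrite mxE; case: eqP => [e|]; last by rewrite mul0r.
by move: (ltn_ord l); rewrite -e ltnNge h.
Qed.

Lemma blk_off_eq k (i : 'I_(k * p)) (i' : 'I_p) : (i %% p)%N = i' -> blk_off i = i'.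
Proof. by move=> h; apply: val_inj. Qed.

Lemma divDn_self n a : (0 < n)%N -> ((n + a) %/ n = (a %/ n).+1)%N.
Proof. by move=> h; rewrite -{1}(mul1n n) divnMDl // add1n. Qed.

Hypothesis t0 : (0 < t)%N.

Lemma Nmat_succ m : Nmat sigma t E m.+1 =
  block_mx (E 1) 0 (selmx (m * p) ((t-1) * p) *m Gmx) (map_mx sigma (Nmat sigma t E m)).
Proof.
apply/matrixP => i j.
rewrite -[i]splitK -[j]splitK; case: (split i) => a; case: (split j) => b.
- rewrite /= block_mxEul /Nmat mxE /=.
  rewrite !divn_small // leqnn subnn t0 /=.
  by congr (E 1 _ _); apply: val_inj; rewrite /= modn_small.
- have q0 : (0 < q)%N by have : (0 < m * q)%N := leq_ltn_trans (leq0n _) (ltn_ord b); rewrite muln_gt0 => /andP[].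
  rewrite /= block_mxEur /Nmat mxE /=.
  by rewrite divDn_self // (divn_small (ltn_ord a)) /= mxE.
- have p0 : (0 < p)%N by have : (0 < m * p)%N := leq_ltn_trans (leq0n _) (ltn_ord a); rewrite muln_gt0 => /andP[].
  rewrite /= block_mxEdl /Nmat mxE /=.
  rewrite divDn_self // (divn_small (ltn_ord b)) subn0 /=.
  case: (ltnP a ((t-1) * p)) => h.
    rewrite sel_mulE mxE.
    have -> : ((a %/ p).+1 < t)%N by move: h; rewrite -ltn_divLR //; lia.
    congr (sigma (iter _ _ (E _ _ _))); apply: val_inj; [by rewrite /= modnDl | by rewrite /= modn_small].
  rewrite sel_mul0 //.
  have -> : ((a %/ p).+1 < t)%N = false.
    apply/negbTE; rewrite -leqNgt; move: h; rewrite -leq_divRL //; lia.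
  by [].
- have p0 : (0 < p)%N by have : (0 < m * p)%N := leq_ltn_trans (leq0n _) (ltn_ord a); rewrite muln_gt0 => /andP[].
  have q0 : (0 < q)%N by have : (0 < m * q)%N := leq_ltn_trans (leq0n _) (ltn_ord b); rewrite muln_gt0 => /andP[].
  rewrite /= block_mxEdr /Nmat !mxE /=.
  rewrite !divDn_self // ltnS subSS; case: ifP => _; last by rewrite rmorph0.
  congr (sigma (iter _ _ (E _ _ _))); apply: val_inj; rewrite /= modnDl //.
Qed.

Definition Psel m := selmx (m * p) ((t-1) * p).
Definition W m : 'M[K]_(m * p, (t-1) * p) := kermx (Nmat sigma t E m) *m Psel m.
Definition T2 : 'M[K]_((t-1) * p) := \matrix_(i,j) ((i:nat) + p == j)%:R.
Definition Psi r (V : 'M[K]_(r, (t-1) * p)) :=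
  kermx (col_mx (E 1) (V *m Gmx)) *m col_mx (selmx p ((t-1) * p)) (V *m T2).
Definition Dr r (V : 'M[K]_(r, (t-1) * p)) := \rank (col_mx (E 1) (V *m Gmx)).

Lemma map_sel n1 n2 : map_mx sigma (selmx n1 n2) = selmx n1 n2.
Proof. by apply/matrixP => i j; rewrite !mxE rmorph_nat. Qed.

Lemma sel_succ n N :
  selmx (p + n) N = col_mx (selmx p N) (selmx n N *m
     (\matrix_(i < N, j < N) ((i:nat) + p == j)%:R)).
Proof.
apply/matrixP => i j; rewrite -[i]splitK; case: (split i) => a.
  by rewrite /= col_mxEu !mxE.
rewrite /= col_mxEd.
case: (ltnP a N) => h.
  by rewrite sel_mulE !mxE /= addnC.
rewrite sel_mul0 // mxE /=; case: eqP => // e.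
by move: (ltn_ord j); rewrite -e ltnNge (leq_trans h (leq_addl _ _)).
Qed.

Lemma rank_succ m :
  \rank (Nmat sigma t E m.+1) = (Dr (map_mx sigma (W m)) + \rank (Nmat sigma t E m))%N.
Proof.
rewrite Nmat_succ rank_blk mxrank_map /Dr /W -map_kermx map_mxM map_sel /Psel.
by rewrite mulmxA.
Qed.

Lemma W_succ m : (W m.+1 :=: Psi (map_mx sigma (W m)))%MS.
Proof.
rewrite /W /Psi (_ : Psel m.+1 = selmx (p + m * p) ((t-1) * p)) //.
rewrite Nmat_succ.
apply: eqmx_trans (eqmxMr _ (ker_blk _ _ _)) _.
rewrite -mulmxA sel_succ mul_block_col !mul1mx !mul0mx addr0 add0r.
by rewrite -map_kermx map_mxM map_sel mulmxA /Psel mulmxA.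
Qed.

Lemma Psi_mono r r' (V : 'M[K]_(r, (t-1) * p)) (V' : 'M[K]_(r', (t-1) * p)) :
  (V <= V')%MS -> (Psi V <= Psi V')%MS.
Proof.
case/submxP => X ->; rewrite /Psi.
set L := kermx _.
have -> : col_mx (selmx p ((t-1) * p)) (X *m V' *m T2)
   = block_mx 1%:M 0 0 X *m col_mx (selmx p ((t-1) * p)) (V' *m T2).
  by rewrite mul_block_col !mul1mx !mul0mx addr0 add0r mulmxA.
rewrite mulmxA; apply: submxMr; apply/sub_kermxP.
rewrite -[L *m _ *m _]mulmxA. have -> : block_mx 1%:M 0 0 X *m col_mx (E 1) (V' *m Gmx) = col_mx (E 1) (X *m V' *m Gmx).
  by rewrite mul_block_col !mul1mx !mul0mx addr0 add0r mulmxA.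
by rewrite /L mulmx_ker.
Qed.

Lemma Psi_eq r r' (V : 'M[K]_(r, (t-1) * p)) (V' : 'M[K]_(r', (t-1) * p)) :
  (V :=: V')%MS -> (Psi V :=: Psi V')%MS.
Proof. by move=> e; apply/eqmxP; rewrite !Psi_mono ?e. Qed.

Lemma Dr_eq r r' (V : 'M[K]_(r, (t-1) * p)) (V' : 'M[K]_(r', (t-1) * p)) :
  (V :=: V')%MS -> Dr V = Dr V'.
Proof.
move=> e.
have e2 : (col_mx (E 1) (V *m Gmx) :=: col_mx (E 1) (V' *m Gmx))%MS.
  apply: eqmx_trans (eqmx_sym (addsmxE _ _)) (eqmx_trans (adds_eqmx (eqmx_refl _) (eqmxMr _ e)) (addsmxE _ _)).
by rewrite /Dr e2.
Qed.

Lemma W_le m : (W m <= W m.+1)%MS.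
Proof.
elim: m => [|m IH].
  by rewrite [W 0]flatmx0 sub0mx.
rewrite (W_succ m.+1) (W_succ m); apply: Psi_mono.
by rewrite map_submx.
Qed.

Lemma W_stable m : (W m :=: W m.+1)%MS -> (W m.+1 :=: W m.+2)%MS.
Proof.
move=> e; apply: eqmx_trans (W_succ m) _; apply: eqmx_sym.
apply: eqmx_trans (W_succ m.+1) _; apply: Psi_eq.
by apply/map_eqmx; apply: eqmx_sym.
Qed.

Lemma W_full : \rank (W (t-1)) = ((t-1) * p - \rank (Nmat sigma t E (t-1)))%N.
Proof.
rewrite /W /Psel (_ : selmx _ _ = 1%:M) ?mulmx1 ?mxrank_ker //.
by apply/matrixP => i j; rewrite !mxE.
Qed.

Lemma main_sec : exists (d : nat) (a : int) (k0 : nat),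
    (k0 <= (t - 1) * (minn p q + 2))%N /\
    forall k : nat, (0 < k)%N -> (k0 <= k)%N ->
      (\rank (Nmat sigma t E k))%:Z = (d * k)%:Z + a.
Proof.
set R := (\rank (Nmat sigma t E (t-1)))%N.
have fle : forall m, (\rank (W m) <= (t-1) * p)%N by move=> m; apply: rank_leq_col.
have fmono : forall m, (\rank (W m) <= \rank (W m.+1))%N by move=> m; apply: mxrankS (W_le m).
have hR : (R <= (t-1) * p)%N by apply: rank_leq_row.
have hex : exists j, (j <= R)%N /\ (\rank (W (t-1+j).+1) <= \rank (W (t-1+j)))%N.
  case: (boolP [exists j : 'I_R.+1, (\rank (W (t-1+j).+1) <= \rank (W (t-1+j)))%N]).
    by case/existsP => j hj; exists j; split => //; rewrite -ltnS ltn_ord.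
  rewrite negb_exists => /forallP hall.
  have inc : forall i, (i <= R.+1)%N -> (\rank (W (t-1)) + i <= \rank (W (t-1+i)))%N.
    elim => [|i IH] hi; first by rewrite !addn0.
    have := hall (Ordinal hi); rewrite /= -ltnNge => h.
    have := IH (ltnW hi); rewrite -addnS in h; lia.
  have := inc R.+1 (leqnn _); have := fle (t-1+R.+1)%N; rewrite W_full; lia.
case: hex => j [hj hle].
set m0 := (t-1+j)%N.
have e0 : (W m0 :=: W m0.+1)%MS.
  apply/eqmxP; have := mxrank_leqif_eq (W_le m0); case => _ <-.
  by rewrite eqn_leq hle fmono.
have st : forall i, (W (m0+i) :=: W (m0+i).+1)%MS.
  by elim=> [|i IH]; [rewrite addn0 | rewrite addnS; apply: W_stable].
have estab : forall i, (W (m0+i) :=: W m0)%MS.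
  elim => [|i IH]; first by rewrite addn0.
  by rewrite addnS; apply: eqmx_trans (eqmx_sym (st i)) IH.
set d := Dr (map_mx sigma (W m0)).
have rk : forall i, \rank (Nmat sigma t E (m0+i)) = (\rank (Nmat sigma t E m0) + i * d)%N.
  elim=> [|i IH]; first by rewrite addn0 mul0n addn0.
  rewrite addnS rank_succ IH.
  have -> : Dr (map_mx sigma (W (m0 + i))) = d by apply: Dr_eq; apply/map_eqmx; apply: estab.
  by rewrite mulSn; lia.
exists d, ((\rank (Nmat sigma t E m0))%:Z - (m0 * d)%:Z), m0; split.
  have hRm : (R <= (t-1) * minn p q)%N.
    case: (leqP p q) => h.
      by apply: rank_leq_row.
    by apply: rank_leq_col.
  rewrite mulnDr; lia.
move=> k _ hk.
have -> : k = (m0 + (k - m0))%N by lia.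
rewrite rk; set i := (k - m0)%N.
rewrite mulnDr !PoszD !PoszM; lia.
Qed.
End Conc.

Unset Implicit Arguments.

Theorem mainTheorem6 (K : fieldType) (sigma : {rmorphism K -> K})
  (p q t : nat) (E : nat -> 'M[K]_(p, q)) :
  (1 <= t)%N ->
  exists (d : nat) (a : int) (k0 : nat),
    (k0 <= (t - 1) * (minn p q + 2))%N /\
    forall k : nat, (0 < k)%N -> (k0 <= k)%N ->
      (\rank (Nmat sigma t E k))%:Z = (d * k)%:Z + a.
Proof. by move=> t0; apply: main_sec. Qed.
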